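(* Let $n\ge 3$. For the power graph $P(G(n))$ of the gyrogroup $G(n)$ (defined in the context), $$dis(P(G(n)),i)=\begin{cases}2^n, & i=0,\\ \dfrac{2^{n-1}(2^{n-1}+1)}{2}, & i=1,\\ \dfrac{3\cdot 2^{n-1}(2^{n-1}-1)}{2}, & i=2.\end{cases}$$
   Context: Let $n\ge 3$ be an integer and $m=2^{n-1}$. Let $P(n)=\{0,1,\dots,m-1\}$, $H(n)=\{m,m+1,\dots,2^n-1\}$ and $G(n)=P(n)\cup H(n)$. For $i,j\in G(n)$ let $t,s,k\in P(n)$ be the residues modulo $m$ (taken in $\{0,\dots,m-1\}$) of $i+j$, $i+(\frac m2-1)j$ and $(\frac m2+1)i+(\frac m2-1)j$, respectively, and define $i\oplus j=t$ if $i,j\in P(n)$; $i\oplus j=t+m$ if $i\in P(n),j\in H(n)$; $i\oplus j=s+m$ if $i\in H(n),j\in P(n)$; $i\oplus j=k$ if $i,j\in H(n)$. Then $(G(n),\oplus)$ is a gyrogroup with identity $e=0$. Powers are defined by $a^1=a$, $a^{k+1}=a^k\oplus a$. The power graph $P(G(n))$ is the simple undirected graph with vertex set $G(n)$ in which distinct vertices $u,v$ are adjacent if and only if $u^k=v$ or $v^k=u$ for some positive integer $k$. For a connected graph $G$ with distance function $d$, $dis(G,i)$ denotes the number of unordered pairs $\{u,v\}$ of vertices (with $u=v$ allowed) such that $d(u,v)=i$. *)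

(* Defs.v *)
From mathcomp Require Import all_boot.
From mathcomp Require Import boolp.
Set Implicit Arguments. Unset Strict Implicit. Unset Printing Implicit Defensive.

(* m = 2^(n-1); elements of G(n) are the naturals 0 .. 2^n - 1. *)
Definition gm (n : nat) : nat := 2 ^ n.-1.

Definition gop (n i j : nat) : nat :=
  let m := gm n in
  let t := (i + j) %% m in
  let s := (i + (m %/ 2 - 1) * j) %% m in
  let k := ((m %/ 2 + 1) * i + (m %/ 2 - 1) * j) %% m in
  if i < m then (if j < m then t else t + m)
  else (if j < m then s + m else k).

Fixpoint gpow (n a k : nat) : nat :=
  match k with
  | 0 => 0
  | 1 => a
  | k'.+1 => gop n (gpow n a k') a
  end.

Notation vtx n := ('I_(2 ^ n)).

Definition padj (n : nat) (u v : vtx n) : Prop :=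
  u <> v /\ exists k, 0 < k /\
    (gpow n (val u) k = val v \/ gpow n (val v) k = val u).

Fixpoint pwalk (n : nat) (k : nat) (u v : vtx n) : Prop :=
  match k with
  | 0 => u = v
  | k'.+1 => exists w, padj u w /\ pwalk k' w v
  end.

Definition pdist_eq (n : nat) (u v : vtx n) (i : nat) : Prop :=
  pwalk i u v /\ forall j, j < i -> ~ pwalk j u v.

(* dis(P(G(n)), i): number of unordered pairs {u,v} (u = v allowed)
   with d(u,v) = i; an unordered pair is represented by (u,v) with u <= v. *)
Definition dis (n i : nat) : nat :=
  #|[set p : vtx n * vtx n | (val p.1 <= val p.2) && `[< pdist_eq p.1 p.2 i >]]|.

(* Main.v *)
Require Import Defs.
From mathcomp Require Import all_boot.
From mathcomp Require Import boolp.
From mathcomp Require Import zify.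

Section Gyro.
Variable n : nat.
Hypothesis hn : 3 <= n.
Let m := gm n.

Lemma m_half : m %/ 2 * 2 = m /\ 2 <= m %/ 2.
Proof.
have e : m = (2 ^ (n - 3) * 2) * 2.
  rewrite /m /gm -mulnA (_ : 2 * 2 = 2 ^ 2) // -expnD; congr (_ ^ _); lia.
have p := expn_gt0 2 (n - 3).
rewrite e mulnK //; split => //; lia.
Qed.

Lemma m_pos : 0 < m.
Proof. by rewrite /m /gm expn_gt0. Qed.

Lemma N_eq : 2 ^ n = m + m.
Proof. rewrite /m /gm; case: n hn => [|k] // _ /=. by rewrite expnS addnn mul2n. Qed.

Lemma gpowSS a k : gpow n a k.+2 = gop n (gpow n a k.+1) a.
Proof. by []. Qed.

Lemma gpow_P a k : a < m -> gpow n a k = (k * a) %% m.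
Proof.
move=> ha; case: k => [|k]; first by rewrite mul0n mod0n.
elim: k => [|k IH]; first by rewrite mul1n modn_small.
rewrite gpowSS IH /gop -/m ltn_pmod ?m_pos // ha.
by rewrite modnDml mulSn addnC.
Qed.

Lemma gpow_H a k : m <= a < m + m -> gpow n a k = if odd k then a else 0.
Proof.
move=> /andP [h1 h2]; have [hh hh2] := m_half.
case: k => [|k] //.
elim: k => [|k IH] //.
rewrite gpowSS IH /gop -/m /=.
case: (odd k) => /=.
  rewrite m_pos.
  have -> : ((0 + a) %% m) = a - m.
    rewrite add0n -{1}(subnK h1) modnDr modn_small //; lia.
  by rewrite ltnNge h1 /= subnK.
rewrite ltnNge h1 /=.
have -> : (m %/ 2 + 1) * a + (m %/ 2 - 1) * a = a * m.
  rewrite -mulnDl mulnC; congr (_ * _); lia.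
by rewrite modnMl.
Qed.

Lemma gpow_2m a : a < m + m -> gpow n a (m + m) = 0.
Proof.
move=> ha; case: (ltnP a m) => h.
  by rewrite gpow_P // (_ : (m + m) * a = (2 * a) * m) ?modnMl //; nia.
by rewrite gpow_H ?h ?ha // oddD addbb.
Qed.

Lemma pow_cases a k : a < m + m ->
  (gpow n a k == a) || (gpow n a k == 0) || ((a < m) && (gpow n a k < m)).
Proof.
move=> ha; case: (ltnP a m) => h.
  rewrite gpow_P // ltn_pmod ?m_pos //. by rewrite !orbT.
rewrite gpow_H ?h ?ha //; case: (odd k); by rewrite eqxx ?orbT.
Qed.

Lemma pow2_dvd d : d %| m -> exists x, d = 2 ^ x.
Proof. by rewrite /m /gm => /(dvdn_pfactor d n.-1 (isT : prime 2)) [x _ ->]; exists x. Qed.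

Lemma bez1 a b : a < m -> b < m -> gcdn a m %| gcdn b m ->
  exists k, 0 < k /\ (k * a) %% m = b.
Proof.
move=> ha hb hd.
have hgb : gcdn a m %| b by apply: dvdn_trans hd (dvdn_gcdl _ _).
case: (posnP a) => [a0|apos].
  move: hgb; rewrite ?a0 gcd0n => hmb.
  have b0 : b = 0.
    case: (posnP b) => // bp; have := dvdn_leq bp hmb; lia.
  by exists 1; rewrite b0 mul1n mod0n; split.
case: (@egcdnP a m apos) => km kn hk _.
set g := gcdn a m in hk hgb.
have [q hq] : exists q, b = q * g by exists (b %/ g); rewrite divnK.
exists (km * q + m); split; first by have := m_pos; lia.
have -> : (km * q + m) * a = (q * kn + a) * m + b.
  rewrite mulnDl (mulnC km) -mulnA hk hq; nia.
by rewrite modnMDl modn_small.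
Qed.

Lemma bez a b : a < m -> b < m ->
  exists k, 0 < k /\ ((k * a) %% m = b \/ (k * b) %% m = a).
Proof.
move=> ha hb.
have [x hx] := pow2_dvd _ (dvdn_gcdr a m).
have [y hy] := pow2_dvd _ (dvdn_gcdr b m).
case: (leqP x y) => hxy.
  have hd : gcdn a m %| gcdn b m by rewrite hx hy dvdn_exp2l.
  have [k [hk1 hk2]] := bez1 _ _ ha hb hd.
  by exists k; split; [|left].
have hd : gcdn b m %| gcdn a m by rewrite hx hy dvdn_exp2l // ltnW.
have [k [hk1 hk2]] := bez1 _ _ hb ha hd.
by exists k; split; [|right].
Qed.

Definition Ab (x y : nat) : bool :=
  (x != y) && ((x == 0) || (y == 0) || ((x < m) && (y < m))).

Lemma adjP (u v : vtx n) : padj u v <-> Ab (val u) (val v).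
Proof.
have hu : val u < m + m by rewrite -N_eq; exact: ltn_ord.
have hv : val v < m + m by rewrite -N_eq; exact: ltn_ord.
split.
  move=> [huv [k [hk hp]]].
  have hne : val u != val v by apply/eqP => /val_inj.
  rewrite /Ab hne /=.
  case: hp => hp.
    have := pow_cases _ k hu; rewrite hp; simpl in *; lia.
  have := pow_cases _ k hv; rewrite hp; simpl in *; lia.
rewrite /Ab => /andP [hne hor]; split; first by move=> e; rewrite e eqxx in hne.
case/orP: hor => [/orP [] /eqP h0|/andP [h1 h2]].
- exists (m + m); split; first by have := m_pos; lia.
  by right; rewrite gpow_2m.
- exists (m + m); split; first by have := m_pos; lia.
  by left; rewrite gpow_2m.
- have [k [hk hk2]] := bez _ _ h1 h2; exists k; split => //.
  by rewrite !gpow_P.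
Qed.

Definition z0 : vtx n := Ordinal (expn_gt0 2 n).

Lemma d0 (u v : vtx n) : pdist_eq u v 0 <-> (val u == val v).
Proof.
split; first by move=> [/= -> _].
by move=> /eqP /val_inj e; split => //.
Qed.

Lemma pwalk1 (u v : vtx n) : pwalk 1 u v <-> padj u v.
Proof. by split; [move=> [w [h <-]]|move=> h; exists v]. Qed.

Lemma d1 (u v : vtx n) : pdist_eq u v 1 <-> Ab (val u) (val v).
Proof.
rewrite -adjP; split; first by move=> [/pwalk1].
move=> h; split; first by apply/pwalk1.
by case=> // _ /= e; case: h.
Qed.

Lemma d2 (u v : vtx n) : pdist_eq u v 2 <->
  (val u != val v) && ~~ Ab (val u) (val v).
Proof.
split.
  move=> [_ hj].
  have h0 : val u != val v by apply/negP => /eqP /val_inj e; apply: (hj 0).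
  rewrite h0 /=; apply/negP => /adjP h; apply: (hj 1) => //; exact/pwalk1.
move=> /andP [hne hA]; split.
  exists z0; split.
    apply/adjP; move: hne hA; rewrite /Ab /=; lia.
  exists v; split => //; apply/adjP; move: hne hA; rewrite /Ab /=; lia.
move=> j hj; case: j hj => [|[|]] // _.
  by move=> /= e; rewrite e eqxx in hne.
by move=> /pwalk1 /adjP; apply/negP.
Qed.

End Gyro.

Lemma card_pairs N (Q : nat -> nat -> bool) :
  #|[set p : 'I_N * 'I_N | Q p.1 p.2]| = \sum_(j < N) \sum_(i < N) Q i j.
Proof.
rewrite (exchange_big _ _ (index_enum _)) /= pair_big /=.
rewrite -sum1_card big_mkcond /=; apply: eq_bigr => p _.
by rewrite inE; case: (Q _ _).
Qed.

Lemma sum_eq N (j : nat) : \sum_(i < N) (nat_of_ord i == j : nat) = (j < N).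
Proof.
elim: N => [|N IH]; first by rewrite big_ord0.
rewrite big_ord_recr /= IH; lia.
Qed.

Lemma sum_lt N j : \sum_(i < N) (i < j : nat) = minn j N.
Proof.
elim: N => [|N IH]; first by rewrite big_ord0; lia.
rewrite big_ord_recr /= IH; lia.
Qed.

Lemma sum_lt0 N j : \sum_(i < N) ((0 < i) && (i < j) : nat) = (minn j N).-1.
Proof.
elim: N => [|N IH]; first by rewrite big_ord0; lia.
rewrite big_ord_recr /= IH; lia.
Qed.

Lemma outer1 m K : 2 * \sum_(j < K) (if j < m then nat_of_ord j else 1) =
  if K <= m then K * (K - 1) else m * (m - 1) + 2 * (K - m).
Proof.
elim: K => [|K IH]; first by rewrite big_ord0.
rewrite big_ord_recr /= mulnDr IH.
case: (ltngtP K m) => h; try subst; nia.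
Qed.

Lemma outer2 m K : 2 <= m -> 2 * \sum_(j < K) (if j < m then 0 else j.-1) =
  (K - m) * (K + m - 3).
Proof.
move=> hm.
elim: K => [|K IH]; first by rewrite big_ord0.
rewrite big_ord_recr /= mulnDr IH.
case: (ltnP K m) => h.
- have -> : K.+1 - m = 0 by lia. have -> : K - m = 0 by lia. by [].
- have -> : K.+1 - m = (K - m).+1 by lia.
  have -> : K.+1 + m - 3 = (K + m - 3).+1 by lia.
  nia.
Qed.

Theorem mainTheorem3 (n : nat) (hn : 3 <= n) :
  [/\ dis n 0 = 2 ^ n,
      dis n 1 = 2 ^ n.-1 * (2 ^ n.-1 + 1) %/ 2
    & dis n 2 = 3 * 2 ^ n.-1 * (2 ^ n.-1 - 1) %/ 2].
Proof.
have [hh hh2] := m_half n hn.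
have hm : 2 <= gm n by lia.
have hN := N_eq n hn.
have h2 : 2 %| gm n by apply/dvdnP; exists (gm n %/ 2); rewrite hh.
split.
- rewrite /dis.
  rewrite (eq_card (B := [set p : vtx n * vtx n | (nat_of_ord p.1 <= nat_of_ord p.2) && (nat_of_ord p.1 == nat_of_ord p.2)])); last first.
    move=> p; rewrite !inE; congr (_ && _); apply/asboolP/idP => /(d0 n p.1 p.2) //.
  rewrite (card_pairs _ (fun x y : nat => (x <= y) && (x == y))).
  transitivity (\sum_(j < 2 ^ n) 1).
    apply: eq_bigr => j _.
    rewrite (eq_bigr (fun i : 'I_(2 ^ n) => (nat_of_ord i == nat_of_ord j : nat))); last by move=> i _ /=; lia.
    by rewrite sum_eq ltn_ord.
  by rewrite sum_nat_const card_ord muln1.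
- rewrite /dis.
  rewrite (eq_card (B := [set p : vtx n * vtx n | (nat_of_ord p.1 <= nat_of_ord p.2) && Ab n (nat_of_ord p.1) (nat_of_ord p.2)])); last first.
    move=> p; rewrite !inE; congr (_ && _); apply/asboolP/idP => /(d1 n hn p.1 p.2) //.
  rewrite (card_pairs _ (fun x y : nat => (x <= y) && Ab n x y)).
  transitivity (\sum_(j < 2 ^ n) (if j < gm n then nat_of_ord j else 1)).
    apply: eq_bigr => j _.
    have hj : nat_of_ord j < gm n + gm n by rewrite -hN.
    case: ifP => hjm.
      rewrite (eq_bigr (fun i : 'I_(2 ^ n) => (nat_of_ord i < nat_of_ord j : nat))); last by move=> i _ /=; rewrite /Ab; lia.
      by rewrite sum_lt; have := ltn_ord j; lia.
    rewrite (eq_bigr (fun i : 'I_(2 ^ n) => (nat_of_ord i == 0 : nat))); last by move=> i _ /=; rewrite /Ab; lia.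
    by rewrite sum_eq expn_gt0.
  apply/eqP; rewrite -(eqn_pmul2l (isT : 0 < 2)); apply/eqP.
  rewrite outer1 hN ifF; last lia.
  have -> : gm n * (gm n + 1) = (gm n * (gm n + 1)) %/ 2 * 2.
    by rewrite divnK // dvdn_mulr.
  rewrite /gm; rewrite /gm in hh hh2 hm; lia.
- rewrite /dis.
  rewrite (eq_card (B := [set p : vtx n * vtx n | (nat_of_ord p.1 <= nat_of_ord p.2) && ((nat_of_ord p.1 != nat_of_ord p.2) && ~~ Ab n (nat_of_ord p.1) (nat_of_ord p.2))])); last first.
    move=> p; rewrite !inE; congr (_ && _); apply/asboolP/idP => /(d2 n hn p.1 p.2) //.
  rewrite (card_pairs _ (fun x y : nat => (x <= y) && ((x != y) && ~~ Ab n x y))).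
  transitivity (\sum_(j < 2 ^ n) (if j < gm n then 0 else (nat_of_ord j).-1)).
    apply: eq_bigr => j _.
    have hj : nat_of_ord j < gm n + gm n by rewrite -hN.
    case: ifP => hjm.
      by rewrite big1 // => i _ /=; rewrite /Ab; lia.
    rewrite (eq_bigr (fun i : 'I_(2 ^ n) => ((0 < nat_of_ord i) && (nat_of_ord i < nat_of_ord j) : nat))); last by move=> i _ /=; rewrite /Ab; lia.
    by rewrite sum_lt0; have := ltn_ord j; lia.
  apply/eqP; rewrite -(eqn_pmul2l (isT : 0 < 2)); apply/eqP.
  rewrite outer2 // hN.
  have -> : 3 * gm n * (gm n - 1) = (3 * gm n * (gm n - 1)) %/ 2 * 2.
    by rewrite divnK // dvdn_mulr // dvdn_mull.
  rewrite /gm; rewrite /gm in hh hh2 hm; nia.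
Qed.
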